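(* In the setting of the weighted M-posterior, assume there is $\delta>0$ such that the prior density $\pi$ is continuous and positive on the ball $B_{\theta^*}(\delta)\subseteq\Theta$, and that the Weighted M-LAN condition holds. Then for any $\eta,\epsilon>0$ there exist a sequence $r_n\to+\infty$ and an integer $N(\eta,\epsilon)$ such that for all $n>N(\eta,\epsilon)$, $$P_0\Big(\sup_{g,h\in\overline B_{\mathbf 0}(r_n)}f_n(g,h)>\eta\Big)\le\epsilon,$$ where $\overline B_{\mathbf 0}(r)$ is the closed ball of radius $r$ about $\mathbf 0\in\mathbb R^p$.
   Context: $X_1,X_2,\dots$ i.i.d. from $P_0$, $\theta^*$ interior to $\Theta\subseteq\mathbb R^p$, loss $\rho$, score $\psi=\nabla_\theta\rho$, positive weights $\alpha_i$ with $\limsup_n n^{-1}\sum_{i\le n}\alpha_i^2<\infty$, $\bar\alpha_n=n^{-1}\sum_{i\le n}\alpha_i$, weighted M-estimator $\hat\theta^{\boldsymbol\alpha}_\rho$ solving $\sum_i\alpha_i\psi(X_i,\theta)=0$, weighted M-posterior $\pi_n^\rho(\theta\mid F_n^{\boldsymbol\alpha})\propto\exp(-\sum_{i=1}^n\alpha_i\rho(X_i,\theta))\pi(\theta)$. Set $\Delta_n=\sqrt n(\hat\theta^{\boldsymbol\alpha}_\rho-\theta^* )$, $\phi_n(h)=\phi(h\mid\Delta_n,V_{\theta^*}^{-1}/\bar\alpha_n)$ (normal density), $\pi^{\mathrm{W}}_n(h)=n^{-p/2}\pi_n^\rho(\theta^*+h/\sqrt n\mid F_n^{\boldsymbol\alpha})$,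 and $f_n(g,h)=\big\{1-\frac{\phi_n(h)\,\pi^{\mathrm W}_n(g)}{\pi^{\mathrm W}_n(h)\,\phi_n(g)}\big\}^+$. Weighted M-LAN condition: there is a positive definite $V_{\theta^*}$ such that $R_{n,\boldsymbol\alpha}(h)=\sum_{i=1}^n\alpha_i(\rho(X_i,\theta^* )-\rho(X_i,\theta^*+h/\sqrt n))-h^\top\bar\alpha_nV_{\theta^*}\Delta_n+\frac12h^\top\bar\alpha_nV_{\theta^*}h$ satisfies $\sup_{h\in K}|R_{n,\boldsymbol\alpha}(h)|\to0$ in $P_0$-probability for every compact $K$. *)

(* Defs.v *)
From HB Require Import structures.
From mathcomp Require Import all_boot all_order all_algebra.
From mathcomp Require Import all_classical all_reals all_analysis.
Set Implicit Arguments. Unset Strict Implicit. Unset Printing Implicit Defensive.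
Import Order.TTheory GRing.Theory Num.Theory.
Import numFieldNormedType.Exports.
Local Open Scope classical_set_scope.
Local Open Scope ring_scope.

Section Defs.
Variable R : realType.

Definition enorm (p : nat) (x : 'rV[R]_p) : R := Num.sqrt (\sum_(j < p) x 0 j ^+ 2).
Definition eball (p : nat) (c : 'rV[R]_p) (r : R) : set 'rV[R]_p :=
  [set x | enorm (x - c) < r].
Definition ecball (p : nat) (c : 'rV[R]_p) (r : R) : set 'rV[R]_p :=
  [set x | enorm (x - c) <= r].

Definition bform (p : nat) (x : 'rV[R]_p) (M : 'M[R]_p) (y : 'rV[R]_p) : R :=
  (x *m M *m y^T) 0 0.

Definition posdef (p : nat) (M : 'M[R]_p) : Prop :=
  M^T = M /\ forall x : 'rV[R]_p, x != 0 -> 0 < bform x M x.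

Definition normal_pdf (p : nat) (m : 'rV[R]_p) (S : 'M[R]_p) (h : 'rV[R]_p) : R :=
  ((Num.sqrt (2 * pi)) ^+ p)^-1 * (Num.sqrt (\det S))^-1 *
  expR (- (bform (h - m) (invmx S) (h - m)) / 2).

Definition outerP d (T : measurableType d) (P : probability T R) (A : set T) : \bar R :=
  ereal_inf [set P B | B in [set B | measurable B /\ A `<=` B]].

Definition iid d d' (Om : measurableType d) (Tx : measurableType d')
  (P : probability Om R) (P0 : probability Tx R) (X : nat -> Om -> Tx) : Prop :=
  (forall i, measurable_fun setT (X i)) /\
  (forall i A, measurable A -> P (X i @^-1` A) = P0 A) /\
  (forall (I : seq nat) (A : nat -> set Tx), uniq I -> (forall i, measurable (A i)) ->
     P (\bigcap_(i in [set i | i \in I]) (X i @^-1` A i)) =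
     (\prod_(i <- I) P (X i @^-1` A i))%E).

(* average weight alpha-bar_n, indices i = 0..n-1 stand for 1..n *)
Definition abar (alpha : nat -> R) (n : nat) : R := (n%:R)^-1 * \sum_(i < n) alpha i.

Definition sqn (n : nat) : R := Num.sqrt (n%:R).

Definition Delta (p : nat) (thetahat : 'rV[R]_p) (tstar : 'rV[R]_p) (n : nat) : 'rV[R]_p :=
  sqn n *: (thetahat - tstar).

Definition Mpost d (Tx : measurableType d) (p : nat) (rho : Tx -> 'rV[R]_p -> R)
  (prior : 'rV[R]_p -> R) (Theta : set 'rV[R]_p) (alpha : nat -> R)
  (xs : nat -> Tx) (n : nat) (Z : R) (theta : 'rV[R]_p) : R :=
  expR (- \sum_(i < n) alpha i * rho (xs i) theta) * prior theta * \1_Theta theta / Z.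

Definition piW d (Tx : measurableType d) (p : nat) (rho : Tx -> 'rV[R]_p -> R)
  (prior : 'rV[R]_p -> R) (Theta : set 'rV[R]_p) (alpha : nat -> R)
  (xs : nat -> Tx) (n : nat) (Z : R) (tstar : 'rV[R]_p) (h : 'rV[R]_p) : R :=
  ((sqn n) ^+ p)^-1 * Mpost rho prior Theta alpha xs n Z (tstar + (sqn n)^-1 *: h).

Definition LANrem d (Tx : measurableType d) (p : nat) (rho : Tx -> 'rV[R]_p -> R)
  (alpha : nat -> R) (xs : nat -> Tx) (n : nat) (V : 'M[R]_p)
  (tstar Dn h : 'rV[R]_p) : R :=
  \sum_(i < n) alpha i * (rho (xs i) tstar - rho (xs i) (tstar + (sqn n)^-1 *: h))
  - abar alpha n * bform h V Dn + 2^-1 * (abar alpha n * bform h V h).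

Definition fn d (Tx : measurableType d) (p : nat) (rho : Tx -> 'rV[R]_p -> R)
  (prior : 'rV[R]_p -> R) (Theta : set 'rV[R]_p) (alpha : nat -> R)
  (xs : nat -> Tx) (n : nat) (Z : R) (V : 'M[R]_p) (tstar Dn g h : 'rV[R]_p) : R :=
  let phin := normal_pdf Dn ((abar alpha n)^-1 *: invmx V) in
  let pw := piW rho prior Theta alpha xs n Z tstar in
  Num.max 0 (1 - (phin h * pw g) / (pw h * phin g)).

End Defs.

(* Main.v *)
Require Import Defs.
From HB Require Import structures.
From mathcomp Require Import all_boot all_order all_algebra.
From mathcomp Require Import all_classical all_reals all_analysis.
From mathcomp Require Import ring lra zify.
Import Order.TTheory GRing.Theory Num.Theory.
Import numFieldNormedType.Exports.
Local Open Scope classical_set_scope.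
Local Open Scope ring_scope.

Section Helpers.
Variable R : realType.
Variable p : nat.
Implicit Types (x y z : 'rV[R]_p) (M : 'M[R]_p).

Lemma bformDl x y z M : bform (x + y) M z = bform x M z + bform y M z.
Proof. by rewrite /bform !mulmxDl mxE. Qed.
Lemma bformNl x z M : bform (- x) M z = - bform x M z.
Proof. by rewrite /bform !mulNmx mxE. Qed.
Lemma bformBl x y z M : bform (x - y) M z = bform x M z - bform y M z.
Proof. by rewrite bformDl bformNl. Qed.
Lemma bformDr x y z M : bform z M (x + y) = bform z M x + bform z M y.
Proof. by rewrite /bform linearD /= mulmxDr mxE. Qed.
Lemma bformNr x z M : bform z M (- x) = - bform z M x.
Proof. by rewrite /bform linearN /= mulmxN mxE. Qed.
Lemma bformBr x y z M : bform z M (x - y) = bform z M x - bform z M y.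
Proof. by rewrite bformDr bformNr. Qed.
Lemma bformZm a x y M : bform x (a *: M) y = a * bform x M y.
Proof. by rewrite /bform -scalemxAr -scalemxAl mxE. Qed.
Lemma bformDm x y M N : bform x (M + N) y = bform x M y + bform x N y.
Proof. by rewrite /bform mulmxDr mulmxDl mxE. Qed.
Lemma bform_sym x y M : M^T = M -> bform y M x = bform x M y.
Proof.
move=> HM; rewrite /bform -[in LHS](trmxK (y *m M *m x^T)) mxE.
by rewrite !trmx_mul trmxK HM mulmxA.
Qed.

Lemma bform_quad a x D V : V^T = V ->
  bform (x - D) (a *: V) (x - D) =
  a * (bform x V x - 2 * bform x V D + bform D V D).
Proof.
move=> HV; rewrite bformZm !bformBl !bformBr (bform_sym x D V HV); congr (_ * _).
ring.
Qed.

Lemma bform_mul0 v M : v *m M = 0 -> bform v M v = 0.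
Proof. by move=> h; rewrite /bform h mul0mx mxE. Qed.

Lemma bform1 x : bform x 1%:M x = \sum_(j < p) x 0 j ^+ 2.
Proof.
rewrite /bform mulmx1 mxE; apply: eq_bigr => j _; by rewrite mxE expr2.
Qed.

Lemma sumsq_gt0 x : x != 0 -> 0 < \sum_(j < p) x 0 j ^+ 2.
Proof.
move=> hx.
have [j hj] : exists j, x 0 j != 0.
  apply/existsP; apply: contraNT hx; rewrite negb_exists => /forallP h.
  apply/eqP/matrixP => i k; rewrite ord1 mxE; apply/eqP.
  by move: (h k); rewrite negbK.
rewrite (bigD1 j) //=; apply: ltr_pwDl; first by rewrite exprn_even_gt0.
by apply: sumr_ge0 => i _; rewrite sqr_ge0.
Qed.

Lemma entry_le_enorm x (j : 'I_p) : `|x 0 j| <= enorm x.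
Proof.
rewrite /enorm -sqrtr_sqr; apply: ler_wsqrtr.
rewrite (bigD1 j) //= lerDl; apply: sumr_ge0 => i _; exact: sqr_ge0.
Qed.

Lemma enorm_ge0 x : 0 <= enorm x.
Proof. exact: sqrtr_ge0. Qed.

Lemma mxnorm_le_enorm x : `|x| <= enorm x.
Proof.
change (mx_norm x <= enorm x).
have [->|] := eqVneq (mx_norm x) 0; first exact: enorm_ge0.
move=> /mx_norm_neq0 [[i j] ->] /=; rewrite ord1; exact: entry_le_enorm.
Qed.

Lemma enormZ (c : R) x : enorm (c *: x) = `|c| * enorm x.
Proof.
rewrite /enorm.
have -> : \sum_(j < p) (c *: x) 0 j ^+ 2 = c ^+ 2 * \sum_(j < p) x 0 j ^+ 2.
  rewrite mulr_sumr; apply: eq_bigr => j _; by rewrite mxE exprMn.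
rewrite sqrtrM ?sqr_ge0 // sqrtr_sqr //.
Qed.


Lemma posdef_det_gt0 (V : 'M[R]_p) : posdef V -> 0 < \det V.
Proof.
move=> [HVs HVp].
have nz : forall t : R, 0 <= t <= 1 -> \det ((1 - t)%:M + t *: V : 'M[R]_p) != 0.
  move=> t /andP[t0 t1]; apply/negP => /det0P [v vn0 hv].
  have := bform_mul0 _ _ hv; rewrite bformDm bformZm -scalemx1 bformZm bform1.
  have S0 := sumsq_gt0 _ vn0; have B0 := HVp v vn0.
  move=> h.
  have a0 : 0 <= (1 - t) * \sum_(j < p) v 0 j ^+ 2 by apply: mulr_ge0 => //; lra.
  have b0 : 0 <= t * bform v V v by apply: mulr_ge0 => //; lra.
  have e1 : (1 - t) * \sum_(j < p) v 0 j ^+ 2 = 0 by lra.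
  have e2 : t * bform v V v = 0 by lra.
  move: e1 e2 => /eqP; rewrite mulf_eq0 => /orP[/eqP|/eqP]; last lra.
  move=> h1 /eqP; rewrite mulf_eq0 => /orP[/eqP|/eqP]; lra.
pose q : {poly R} := \det (\matrix_(i < p, j < p) ((1 - 'X) * ((i == j)%:R)%:P + 'X * (V i j)%:P)).
have qE : forall t, q.[t] = \det ((1 - t)%:M + t *: V : 'M[R]_p).
  move=> t; rewrite /q -horner_evalE -det_map_mx; congr (\det _).
  apply/matrixP => i j; rewrite !mxE /= horner_evalE !hornerE /=.
  by rewrite mulr_natr.
rewrite ltNge; apply/negP => hle.
have [x /andP[x0 x1] hr] : exists2 x : R, 0 <= x <= 1 & root (- q) x.
  apply: poly_ivt; first lra.
  rewrite !hornerN !qE subr0 scale0r addr0 det1 subrr scale1r.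
  rewrite -scalemx1 scale0r add0r; apply/andP; split; lra.
move: hr; rewrite rootN /root qE => /eqP h.
by move: (nz x); rewrite x0 x1 h eqxx => /(_ isT).
Qed.

Lemma posdef_unit (V : 'M[R]_p) : posdef V -> V \in unitmx.
Proof.
move=> hV; rewrite unitmxE unitfE; have := posdef_det_gt0 _ hV; lra.
Qed.

End Helpers.

Local Close Scope ring_scope.

Fixpoint Mseq (f : nat -> nat) (k : nat) : nat :=
  if k is k'.+1 then maxn (Mseq f k').+1 (f k) else f 0.

Fixpoint cseq (M : nat -> nat) (n : nat) : nat :=
  if n is n'.+1 then (if (M (cseq M n').+1 <= n'.+1)%N then (cseq M n').+1 else cseq M n')
  else 0.

Lemma Mseq_ge f k : (f k <= Mseq f k)%N.
Proof. case: k => [|k] //=; exact: leq_maxr. Qed.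

Lemma Mseq_lt f k : (Mseq f k < Mseq f k.+1)%N.
Proof. by rewrite /= leq_maxl. Qed.

Lemma Mseq_mono f : {homo Mseq f : a b / (a <= b)%N}.
Proof.
move=> a b; elim: b => [|b IH]; first by rewrite leqn0 => /eqP ->.
rewrite leq_eqVlt => /orP[/eqP -> //|]; rewrite ltnS => /IH h.
exact: (leq_trans h (ltnW (Mseq_lt f b))).
Qed.

Lemma diag (Q : nat -> nat -> Prop) :
  (forall k, exists N, forall n, (N <= n)%N -> Q k n) ->
  exists c : nat -> nat, (forall K, exists N, forall n, (N <= n)%N -> (K <= c n)%N) /\
    exists N, forall n, (N < n)%N -> Q (c n) n.
Proof.
move=> H; have [f Hf] := choice H.
pose M := Mseq f; exists (cseq M).
have inv1 : forall n, (M (cseq M n) <= n)%N \/ cseq M n = 0%N.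
  elim=> [|n IH] /=; first by right.
  case: ifP => h; first by left.
  case: IH => [h'|->]; [left; exact: leqW|by right].
have inv2 : forall n, (n < M (cseq M n).+1)%N.
  elim=> [|n IH] /=.
    have := Mseq_lt f 0; rewrite /M; lia.
  case: ifP => h.
    have := Mseq_lt f (cseq M n).+1; rewrite /M in h IH *; lia.
  rewrite /M in h *; lia.
split.
  move=> K; exists (M K) => n hn; rewrite leqNgt; apply/negP => hlt.
  have := inv2 n; have := Mseq_mono f _ _ hlt; rewrite /M in hn *; lia.
exists (M 0%N) => n hn; apply: Hf.
case: (inv1 n) => [h|->].
  exact: (leq_trans (Mseq_ge f _) h).
by apply: ltnW.
Qed.

Local Open Scope ring_scope.

Lemma outerP_le (R : realType) d (T : measurableType d) (P : probability T R) (A B : set T) :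
  A `<=` B -> (outerP P A <= outerP P B)%E.
Proof.
move=> AB; rewrite /outerP; apply: ereal_inf_le_tmp.
move=> _ [C [mC BC] <-]; exists C => //; split => //; exact: subset_trans AB BC.
Qed.

Lemma ereal_event (R : realType) (u : nat -> \bar R) (eps : R) :
  u @ \oo --> 0%E -> 0 < eps -> exists N, forall n, (N <= n)%N -> (u n <= eps%:E)%E.
Proof.
move=> hu e0.
have hn := @nbhs_open_ereal_lt R 0 (fun _ => eps) e0.
have [N _ hN] := hu _ hn.
exists N => n hn'; apply/ltW; exact: hN.
Qed.

Theorem mainTheorem3
  (R : realType) (d d' : measure_display)
  (Omega : measurableType d) (P : probability Omega R)
  (Tx : measurableType d') (P0 : probability Tx R)
  (X : nat -> Omega -> Tx)              (* X i stands for X_{i+1} *)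
  (p : nat) (Theta : set 'rV[R]_p) (tstar : 'rV[R]_p)
  (rho : Tx -> 'rV[R]_p -> R) (psi : Tx -> 'rV[R]_p -> 'rV[R]_p)
  (alpha : nat -> R)
  (thetahat : nat -> Omega -> 'rV[R]_p)
  (V : 'M[R]_p)                         (* V_{theta^*} of the weighted M-LAN condition *)
  (prior : 'rV[R]_p -> R)
  (Z : nat -> Omega -> R)               (* normalising constant of the M-posterior *)
  (HX : iid P P0 X)
  (Hpsi : forall x theta (j : 'I_p), interior Theta theta ->
            is_derive theta (delta_mx 0 j : 'rV[R]_p) (rho x) (psi x theta 0 j))
  (Halpha_pos : forall i, 0 < alpha i)
  (Halpha_sq : exists C : R, exists N : nat, forall n : nat, (N <= n)%N ->
                 (n%:R)^-1 * \sum_(i < n) alpha i ^+ 2 <= C)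
  (Hest_in : forall n w, thetahat n w \in Theta)
  (Hest : forall n w, \sum_(i < n) alpha i *: psi (X i w) (thetahat n w) = 0)
  (Hprior_nneg : forall theta, 0 <= prior theta)
  (HZ : forall n w, 0 < Z n w)
  (Hprior : exists delta : R, 0 < delta /\ eball tstar delta `<=` Theta /\
             (forall theta, eball tstar delta theta ->
                {for theta, continuous prior} /\ 0 < prior theta))
  (HV : posdef V)
  (HLAN : forall K : set 'rV[R]_p, compact K -> forall e : R, 0 < e ->
       (fun n => outerP P [set w | exists2 h, K h &
           e < `|LANrem rho alpha (fun i => X i w) n V tstar
                    (Delta (thetahat n w) tstar n) h|])
       @ \oo --> 0%E) :
  forall eta eps : R, 0 < eta -> 0 < eps ->
    exists r : nat -> R, r @ \oo --> +oo /\
    exists N : nat, forall n : nat, (N < n)%N ->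
      (outerP P [set w | exists g h, ecball 0 (r n) g /\ ecball 0 (r n) h /\
          (eta < fn rho prior Theta alpha (fun i => X i w) n (Z n w) V tstar
                   (Delta (thetahat n w) tstar n) g h)%R] <= eps%:E)%E.

Proof.
move=> eta eps eta0 eps0.
pose S (r : R) (n : nat) := [set w | exists g h, ecball 0 r g /\ ecball 0 r h /\
          (eta < fn rho prior Theta alpha (fun i => X i w) n (Z n w) V tstar
                   (Delta (thetahat n w) tstar n) g h)%R].
suff core : forall k : nat, exists N, forall n, (N <= n)%N -> (outerP P (S k%:R n) <= eps%:E)%E.
  have [c [cinf [N HN]]] := diag _ core.
  exists (fun n => (c n)%:R); split; last by exists N => n hn; exact: HN.
  apply/cvgryPge => A.
  have [K HK] := cinf (Num.Def.archi_bound `|A|).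
  exists K => // n /= hn.
  apply: (le_trans (ler_norm A)); apply: (le_trans (ltW (archi_boundP (normr_ge0 A)))).
  by rewrite ler_nat; exact: HK.
move=> k.
case: Hprior => delta [delta0 [sub Hpr]].
have tin : eball tstar delta tstar.
  rewrite /eball /= subrr /enorm.
  rewrite (eq_bigr (fun=> 0)) ?big1 // ?sqrtr0 // => j _; by rewrite mxE expr0n.
have [ct pst] := Hpr tstar tin.
set Pst := prior tstar in pst *.
pose eta' := Num.min eta 1.
have eta'0 : 0 < eta' by rewrite lt_min eta0 ltr01.
have eta'1 : eta' <= 1 by rewrite ge_min lexx orbT.
have eta'e : eta' <= eta by rewrite ge_min lexx.
pose gam := Pst * eta' / 4.
have gam0 : 0 < gam by rewrite /gam; apply: divr_gt0 => //; apply: mulr_gt0.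
have := (cvgrPdist_lt _ _).1 ct gam gam0.
move=> hnb; have [d1 d10 hb] := (nbhs_ballP _ _).1 (hnb _).
pose c := Num.min delta d1.
have c0 : 0 < c by rewrite lt_min delta0 d10.
pose K := [set v : 'rV[R]_p | forall i, `[- (k%:R : R), k%:R]%classic (v ord0 i)].
have Kc : compact K.
  by apply: (@rV_compact _ _ (fun=> `[- (k%:R : R), k%:R]%classic)) => i; exact: segment_compact.
pose e := eta' / 4.
have e0 : 0 < e by rewrite /e divr_gt0.
have [N1 HN1] := ereal_event _ _ _ (HLAN K Kc e e0) eps0.
have [N2 HN2] : exists N2, forall n, (N2 <= n)%N -> (k%:R : R) < c * sqn R n /\ (0 < n)%N.
  have kc0 : 0 <= (k%:R / c) ^+ 2 :> R by rewrite sqr_ge0.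
  exists (Num.Def.archi_bound ((k%:R / c) ^+ 2)).+1 => n hn; split; last first.
    exact: leq_trans (ltn0Sn _) hn.
  have h1 : (k%:R / c) ^+ 2 < n%:R :> R.
    apply: (lt_le_trans (archi_boundP kc0)); rewrite ler_nat; exact: ltnW.
  have h2 : k%:R / c < sqn R n.
    rewrite /sqn -(ger0_norm (_ : 0 <= k%:R / c)); last by rewrite divr_ge0 // ltW.
    rewrite -sqrtr_sqr ltr_sqrt //; apply: le_lt_trans h1; exact: kc0.
  by rewrite mulrC -ltr_pdivrMr.
exists (maxn N1 N2) => n hn.
have [hkc n0] := HN2 n (leq_trans (leq_maxr _ _) hn).
apply: le_trans (HN1 n (leq_trans (leq_maxl _ _) hn)); apply: outerP_le.
move=> w [g [h [Hg [Hh Hf]]]].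
apply: contrapT => Hno.
have HR : forall x, ecball 0 k%:R x -> `|LANrem rho alpha (fun i => X i w) n V tstar
                    (Delta (thetahat n w) tstar n) x| <= e.
  move=> x hx; rewrite leNgt; apply/negP => lt; apply: Hno; exists x => //.
  move=> i; rewrite /= in_itv /= -ler_norml.
  have := entry_le_enorm _ _ x i; move: hx; rewrite /ecball /= subr0 => hx hxi; exact: (le_trans hxi hx).
move: Hf; apply/negP; rewrite -leNgt.
pose s := sqn R n.
have s0 : 0 < s by rewrite /s /sqn sqrtr_gt0 ltr0n.
pose a := abar alpha n.
have a0 : 0 < a.
  rewrite /a /abar; apply: mulr_gt0; first by rewrite invr_gt0 ltr0n.
  have sum0 : forall m, (0 < m)%N -> 0 < \sum_(i < m) alpha i.
    case=> // n' _; rewrite big_ord_recl.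
    have := Halpha_pos 0%N; have : 0 <= \sum_(i < n') alpha (bump 0 i).
      by apply: sumr_ge0 => i _; apply: ltW.
    lra.
  exact: sum0.
pose D := Delta (thetahat n w) tstar n.
pose th x := tstar + s^-1 *: x.
have cd : c <= delta by rewrite ge_min lexx.
have cd1 : c <= d1 by rewrite ge_min lexx orbT.
have thP : forall x, ecball 0 k%:R x -> eball tstar delta (th x) /\ `|Pst - prior (th x)| < gam.
  move=> x hx.
  have he : enorm (th x - tstar) < c.
    rewrite /th addrAC subrr add0r enormZ ger0_norm; last by rewrite invr_ge0 ltW.
    apply: (@le_lt_trans _ _ (s^-1 * k%:R)).
      by apply: ler_wpM2l; [rewrite invr_ge0 ltW|move: hx; rewrite /ecball /= subr0].
    by rewrite mulrC ltr_pdivrMr // mulrC.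
  split; first by rewrite /eball /=; exact: lt_le_trans he cd.
  apply: hb; rewrite -ball_normE /ball_ /= distrC.
  apply: le_lt_trans (mxnorm_le_enorm _ _ _) _; exact: lt_le_trans he cd1.
have Vu := posdef_unit _ _ _ HV.
have iS : invmx (a^-1 *: invmx V) = a *: V.
  rewrite invmxZ ?invmxK ?invrK //.
  by rewrite unitmxZ ?unitmx_inv // unitfE invr_eq0 gt_eqF.
have detS : 0 < \det (a^-1 *: invmx V).
  rewrite detZ det_inv; apply: mulr_gt0; first by rewrite exprn_gt0 // invr_gt0.
  by rewrite invr_gt0; apply: posdef_det_gt0.
pose C2 := ((Num.sqrt (2 * pi)) ^+ p)^-1 * (Num.sqrt (\det (a^-1 *: invmx V)))^-1.
have C20 : 0 < C2.
  rewrite /C2; apply: mulr_gt0; rewrite invr_gt0 ?sqrtr_gt0 //.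
  by rewrite exprn_gt0 // sqrtr_gt0 mulr_gt0 // pi_gt0.
pose E x := expR (a * bform x V D - a / 2 * bform x V x).
have phE : forall x : 'rV[R]_p, Defs.normal_pdf D (a^-1 *: invmx V) x =
    (C2 * expR (- (a / 2) * bform D V D)) * E x.
  move=> x; rewrite /Defs.normal_pdf iS bform_quad; last exact: HV.1.
  rewrite -/C2 -mulrA -expRD; congr (_ * expR _).
  move: (bform x V x) (bform x V D) (bform D V D) => u v z.
  have hr : forall a u v z : R, - (a * (u - 2 * v + z)) / 2 = - (a / 2) * z + (a * v - a / 2 * u) by move=> *; field.
  exact: hr.
pose S0 := \sum_(i < n) alpha i * rho (X i w) tstar.
pose Rm x := LANrem rho alpha (fun i => X i w) n V tstar D x.
pose K1 := (s ^+ p)^-1 / Z n w * expR (- S0).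
have pwE : forall x, ecball 0 k%:R x ->
    piW rho prior Theta alpha (fun i => X i w) n (Z n w) tstar x =
    K1 * expR (Rm x) * E x * prior (th x).
  move=> x hx; have [hth _] := thP x hx.
  rewrite /piW /Mpost indicE mem_set; last exact: sub.
  have hL : - (\sum_(i < n) alpha i * rho (X i w) (th x)) =
      - S0 + (Rm x + (a * bform x V D - a / 2 * bform x V x)).
    rewrite /Rm /LANrem -/s -/a -/(th x) -/D.
    have -> : \sum_(i < n) alpha i * (rho (X i w) tstar - rho (X i w) (th x)) =
        S0 - \sum_(i < n) alpha i * rho (X i w) (th x).
      by rewrite /S0 -sumrB; apply: eq_bigr => i _; rewrite mulrBr.
    have hr : forall a u v y z : R, - u = - v + (v - u - a * y + 2^-1 * (a * z) + (a * y - a / 2 * z)).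
      by move=> *; field.
    apply: hr.
  rewrite -/s -/(th x) hL expRD expRD /K1.
  have hr : forall (A B C F G H : R), H != 0 -> A * (B * (C * F) * G * 1 / H) = A / H * B * C * F * G.
    by move=> A B C F G H hH; field.
  apply: hr; exact: lt0r_neq0 (HZ n w).
rewrite /fn -/a -/D /= !phE (pwE g Hg) (pwE h Hh).
have [_ hg] := thP g Hg; have [hthh hh] := thP h Hh.
have ph0 : 0 < prior (th h) := (Hpr _ hthh).2.
have K10 : 0 < K1.
  rewrite /K1; apply: mulr_gt0; last exact: expR_gt0.
  by apply: divr_gt0; [rewrite invr_gt0 exprn_gt0|exact: HZ].
have hr : forall (c e1 eh k1 rg eg pg rh ph : R), c != 0 -> e1 != 0 -> eh != 0 ->
    k1 != 0 -> rh != 0 -> ph != 0 -> eg != 0 ->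
    c * e1 * eh * (k1 * rg * eg * pg) / (k1 * rh * eh * ph * (c * e1 * eg)) =
    pg / ph * (rg / rh).
  move=> c1 e1 eh k1 rg eg pg rh ph H1 H2 H3 H4 H5 H6 H7; field.
  by rewrite H1 H2 H3 H4 H5 H6 H7.
rewrite hr ?lt0r_neq0 ?expR_gt0 //.
have -> : expR (Rm g) / expR (Rm h) = expR (Rm g - Rm h) by rewrite expRD expRN.
set A := prior (th g) / prior (th h).
set B := expR (Rm g - Rm h).
have hA : 1 - eta' / 2 <= A.
  rewrite /A ler_pdivlMr //.
  move: hg hh; rewrite !ltr_norml => /andP[hg1 hg2] /andP[hh1 hh2].
  have e1 : (1 - eta' / 2) * (Pst + gam) = (Pst - gam) - Pst * (eta' * eta') / 8.
    by rewrite /gam; field.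
  have e2 : 0 <= Pst * (eta' * eta') / 8 by apply: divr_ge0 => //; apply: mulr_ge0; [exact: ltW|apply: mulr_ge0; exact: ltW].
  have e3 : (1 - eta' / 2) * prior (th h) <= (1 - eta' / 2) * (Pst + gam).
    by apply: ler_wpM2l; lra.
  lra.
have hB : 1 - eta' / 2 <= B.
  have hRg : `|Rm g| <= e := HR g Hg.
  have hRh : `|Rm h| <= e := HR h Hh.
  move: hRg hRh; rewrite !ler_norml => /andP[r1 r2] /andP[r3 r4].
  apply: le_trans (expR_ge1Dx _); rewrite /e in r1 r2 r3 r4; lra.
have hAB : (1 - eta' / 2) * (1 - eta' / 2) <= A * B.
  by apply: ler_pM => //; lra.
have e4 : (1 - eta' / 2) * (1 - eta' / 2) = 1 - eta' + (eta' * eta') / 4 by field.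
have e5 : 0 <= (eta' * eta') / 4 by apply: divr_ge0 => //; apply: mulr_ge0; exact: ltW.
rewrite ge_max; apply/andP; split; first exact: ltW.
lra.
Qed.
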